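(* Let $\{\alpha_{i,j,k}\}_{1\le i,j,k\le d}$ be real numbers invariant under all permutations of the three indices, let $A_k:=(\alpha_{k,r,s})_{1\le r,s\le d}$ for $k=1,\dots,d$, and fix $i,j\in\{1,\dots,d\}$ with $C_{i,j}:=A_iA_j-A_jA_i$. Then the following are equivalent: (a) $(C_{i,j}\mathbf t)\cdot\big((I-t_1A_1-\cdots-t_dA_d)^{-1}\mathbf t\big)=0$ for all $\mathbf t$ in a neighborhood of $\mathbf 0\in\mathbb R^d$; (b) $(C_{i,j}\mathbf t)\cdot\big((t_1A_1+\cdots+t_dA_d)^n\mathbf t\big)=0$ for all $n\in\mathbb N$ and all $\mathbf t\in\mathbb R^d$; (c) $(C_{i,j}\mathbf t)\cdot\big((t_1A_1+\cdots+t_dA_d)^n\mathbf t\big)=0$ for all $1\le n\le d-1$ and all $\mathbf t\in\mathbb R^d$.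
   Context: $I$ denotes the $d\times d$ identity matrix and $\cdot$ the standard inner product on $\mathbb R^d$. *)

(* Defs.v *)
From HB Require Import structures.
From mathcomp Require Import all_boot all_order all_algebra.
From mathcomp Require Import reals.
Set Implicit Arguments. Unset Strict Implicit. Unset Printing Implicit Defensive.
Import Order.TTheory GRing.Theory Num.Theory.
Local Open Scope ring_scope.

Definition dotv (R : realType) (d : nat) (u v : 'cV[R]_d) : R :=
  \sum_(r < d) u r 0 * v r 0.

Definition fully_symmetric (R : realType) (d : nat) (alpha : 'I_d -> 'I_d -> 'I_d -> R) :=
  forall i j k, alpha i j k = alpha i k j /\ alpha i j k = alpha j i k /\
                alpha i j k = alpha j k i /\ alpha i j k = alpha k i j /\
                alpha i j k = alpha k j i.

Definition Amat (R : realType) (d : nat) (alpha : 'I_d -> 'I_d -> 'I_d -> R) (k : 'I_d)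
  : 'M[R]_d := \matrix_(r, s) alpha k r s.

Definition Cmat (R : realType) (d : nat) (alpha : 'I_d -> 'I_d -> 'I_d -> R) (i j : 'I_d)
  : 'M[R]_d := Amat alpha i *m Amat alpha j - Amat alpha j *m Amat alpha i.

Definition tA (R : realType) (d : nat) (alpha : 'I_d -> 'I_d -> 'I_d -> R) (t : 'cV[R]_d)
  : 'M[R]_d := \sum_(k < d) t k 0 *: Amat alpha k.

(* Main.v *)
Require Import Defs.
From HB Require Import structures.
From mathcomp Require Import all_boot all_order all_algebra.
From mathcomp Require Import reals.
From mathcomp Require Import ring lra.
Import Order.TTheory GRing.Theory Num.Theory.
Local Open Scope ring_scope.

Definition phi (R : realType) d (C : 'M[R]_d) (t : 'cV[R]_d) (Y : 'M[R]_d) :=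
  dotv (C *m t) (Y *m t).
Arguments phi {R d}.

Lemma phiD (R : realType) d (C : 'M[R]_d) t Y1 Y2 :
  phi C t (Y1 + Y2) = phi C t Y1 + phi C t Y2.
Proof.
by rewrite /phi /dotv mulmxDl -big_split; apply: eq_bigr => r _; rewrite !mxE mulrDr.
Qed.

Lemma phiZ (R : realType) d (C : 'M[R]_d) t a Y :
  phi C t (a *: Y) = a * phi C t Y.
Proof.
rewrite /phi /dotv -scalemxAl mulr_sumr; by apply: eq_bigr => r _; rewrite !mxE mulrCA.
Qed.

Lemma phi0 (R : realType) d (C : 'M[R]_d) t : phi C t 0 = 0.
Proof. by rewrite /phi /dotv mul0mx big1 // => r _; rewrite !mxE mulr0. Qed.

Lemma phi_sum (R : realType) d (C : 'M[R]_d) t (I : Type) (r : seq I) (P : pred I) F :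
  phi C t (\sum_(k <- r | P k) F k) = \sum_(k <- r | P k) phi C t (F k).
Proof. by rewrite (big_morph (phi C t) (@phiD _ _ C t) (@phi0 _ _ C t)). Qed.

Lemma dotv_mx (R : realType) d (u v : 'cV[R]_d) : dotv u v = (u^T *m v) 0 0.
Proof. by rewrite /dotv !mxE; apply: eq_bigr => r _; rewrite mxE. Qed.

Lemma phi1 (R : realType) d (C : 'M[R]_d) t : C^T = - C -> phi C t 1%:M = 0.
Proof.
move=> hC; rewrite /phi mul1mx dotv_mx trmx_mul hC mulmxN mulNmx.
have E : forall (X : 'M[R]_1), (- X) 0 0 = - X 0 0 by move=> X; rewrite mxE.
set S := (t^T *m C *m t) 0 0.
have h : S = - S.
  rewrite {1}/S -[t^T *m C *m t]trmxK [in LHS]mxE !trmx_mul trmxK hC.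
  by rewrite mulNmx mulmxN mulmxA E.
rewrite E -/S.
apply/eqP; rewrite oppr_eq0; apply/eqP.
have : S + S = 0 by rewrite {2}h subrr.
by rewrite -mulr2n -mulr_natr => /eqP; rewrite mulf_eq0 pnatr_eq0 orbF => /eqP.
Qed.

Lemma tAZ (R : realType) d (alpha : 'I_d -> 'I_d -> 'I_d -> R) s t :
  tA alpha (s *: t) = s *: tA alpha t.
Proof. by rewrite /tA scaler_sumr; apply: eq_bigr => k _; rewrite mxE scalerA. Qed.

Lemma C_anti (R : realType) d (alpha : 'I_d -> 'I_d -> 'I_d -> R) i j :
  fully_symmetric alpha -> (Cmat alpha i j)^T = - Cmat alpha i j.
Proof.
move=> hs.
have hA : forall k, (Amat alpha k)^T = Amat alpha k.
  by move=> k; apply/matrixP => r s; rewrite !mxE; case: (hs k s r).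
by rewrite /Cmat linearB /= !trmx_mul !hA opprB.
Qed.

Lemma one_mx (R : realType) n : (1%:M : 'M[R]_n.+1) = 1.
Proof. by []. Qed.

Lemma span_ok (R : realType) n (C : 'M[R]_n.+1) t (M : 'M[R]_n.+1) :
  (forall m, (m < n.+1)%N -> phi C t (M ^+ m) = 0) ->
  forall p, phi C t (horner_mx M p) = 0.
Proof.
move=> H p.
rewrite (divp_eq p (char_poly M)) rmorphD rmorphM /= Cayley_Hamilton mulr0 add0r.
have : (size (p %% char_poly M)%R < n.+2)%N.
  by rewrite -(size_char_poly M) ltn_modp -size_poly_eq0 size_char_poly.
set r := p %% _ => hr.
rewrite -(coefK r) poly_def rmorph_sum phi_sum big1 // => k _.

rewrite -mul_polyC rmorphM rmorphXn /= horner_mx_X horner_mx_C -mulmxE mul_scalar_mx phiZ H ?mulr0 //.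
exact: leq_trans (ltn_ord k) hr.
Qed.

Lemma poly_comp_ex (R : realType) n (M : 'M[R]_n.+1) u r :
  exists r2, horner_mx (horner_mx M u) r = horner_mx M r2.
Proof.
elim/poly_ind: r => [|r c [r2 IH]]; first by exists 0; rewrite !rmorph0.
exists (r2 * u + c%:P).
by rewrite !rmorphD !rmorphM /= IH horner_mx_X !horner_mx_C.
Qed.

Lemma inv_left (R : realType) n (X Y : 'M[R]_n) : Y *m X = 1%:M -> invmx X = Y.
Proof.
move=> h; have [_ uX] := mulmx1_unit h.
by rewrite -[Y]mulmx1 -(mulmxV uX) mulmxA h mul1mx.
Qed.

Lemma inv_poly_gen {R : realType} {n} (X : 'M[R]_n.+1) :
  X \in unitmx -> exists r, invmx X = horner_mx X r.
Proof.
move=> uX; set P := char_poly X; set c0 := P`_0.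
have c0nz : c0 != 0.
  by rewrite /c0 char_poly_det mulf_eq0 negb_or signr_eq0 /= -unitfE -unitmxE.
set r0 := \poly_(k < n.+1) P`_k.+1.
have eP : P = r0 * 'X + c0%:P.
  apply/polyP => k; rewrite coefD coefMX coefC coef_poly.
  case: k => [|k] /=; first by rewrite add0r.
  by rewrite addr0; case: ltnP => // hk; rewrite nth_default // size_char_poly.

exists ((- c0^-1) *: r0).
have h0 := Cayley_Hamilton X.
rewrite -/P eP rmorphD rmorphM /= horner_mx_X horner_mx_C in h0.
apply: (@inv_left R); rewrite -mul_polyC rmorphM /= horner_mx_C -mulmxE mul_scalar_mx -scalemxAl.
have e1 : horner_mx X r0 * X = - c0%:M by apply/eqP; rewrite -addr_eq0 h0.
change (horner_mx X r0 *m X) with (horner_mx X r0 * X).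
by rewrite e1 scaleNr scalerN opprK scale_scalar_mx mulVf.
Qed.

Lemma inv_poly (R : realType) n (M : 'M[R]_n.+1) :
  exists r, invmx (1%:M - M) = horner_mx M r.
Proof.
case uX: (1%:M - M \in unitmx).
  have [r hr] := inv_poly_gen _ uX.
  have [r2 h2] := @poly_comp_ex R n M (1 - 'X) r.
  exists r2; rewrite hr -h2; congr horner_mx.
  by rewrite rmorphB /= horner_mx_X (rmorph1 (horner_mx M)).
exists (1 - 'X); rewrite invmx_out ?inE ?uX //.
by rewrite rmorphB /= horner_mx_X (rmorph1 (horner_mx M)).
Qed.

Definition qc (R : realType) n (M : 'M[R]_n.+1) k := (char_poly M)`_(n.+1 - k).
Arguments qc {R n}.
Definition Qp (R : realType) n (M : 'M[R]_n.+1) k : {poly R} :=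
  \sum_(m < k.+1) qc M (k - m) *: 'X^m.
Arguments Qp {R n}.

Lemma qc0 (R : realType) n (M : 'M[R]_n.+1) : qc M 0 = 1.
Proof.
rewrite /qc subn0; have := monicP (char_poly_monic M).
by rewrite lead_coefE size_char_poly.
Qed.

Lemma Qp0 (R : realType) n (M : 'M[R]_n.+1) : Qp M 0 = (qc M 0)%:P.
Proof. by rewrite /Qp big_ord1 expr0 alg_polyC. Qed.

Lemma QpS (R : realType) n (M : 'M[R]_n.+1) k :
  Qp M k.+1 = Qp M k * 'X + (qc M k.+1)%:P.
Proof.
rewrite /Qp big_ord_recl /= subn0 expr0 alg_polyC addrC mulr_suml; congr (_ + _).
by apply: eq_bigr => m _; rewrite /bump /= subSS exprSr scalerAl.
Qed.

Lemma QpN (R : realType) n (M : 'M[R]_n.+1) : Qp M n.+1 = char_poly M.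
Proof.
rewrite /Qp /qc -[RHS]coefK poly_def size_char_poly.
by apply: eq_bigr => m _; rewrite subKn // -ltnS.
Qed.

Lemma tele (R : realType) n (M : 'M[R]_n.+1) s K :
  (\sum_(k < K) s ^+ k *: Qp M k) * (1 - s *: 'X) =
  (\sum_(k < K.+1) qc M k * s ^+ k)%:P - s ^+ K *: Qp M K.
Proof.
elim: K => [|K IH].
  by rewrite big_ord0 mul0r big_ord1 expr0 mulr1 scale1r Qp0 subrr.
rewrite big_ord_recr /= mulrDl IH [in RHS]big_ord_recr /= QpS.
rewrite -!mul_polyC !rmorphD !rmorphM !rmorphXn /=.
move: (Qp M K) ((\sum_(k < K.+1) qc M k * s ^+ k)%:P) (s%:P) ('X : {poly R}) ((qc M K.+1)%:P) => a b c x y.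
rewrite exprS; move: (c ^+ K) => z.
ring.
Qed.

Arguments tele {R n}.

Lemma hZ (R : realType) n (M : 'M[R]_n.+1) a p :
  horner_mx M (a *: p) = a *: horner_mx M p.
Proof. by rewrite -mul_polyC rmorphM /= horner_mx_C -mulmxE mul_scalar_mx. Qed.

Arguments hZ {R n}.

Lemma key_id (R : realType) n (M : 'M[R]_n.+1) s :
  (\sum_(k < n.+1) s ^+ k *: horner_mx M (Qp M k)) *m (1%:M - s *: M) =
  (\sum_(k < n.+2) qc M k * s ^+ k)%:M.
Proof.
have := congr1 (horner_mx M) (tele M s n.+1).
rewrite QpN rmorphM !rmorphB /= !hZ Cayley_Hamilton scaler0 subr0 horner_mx_C.
rewrite horner_mx_X horner_mx_C rmorph_sum /= => <-.
rewrite -mulmxE; congr (_ *m _).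
by apply: eq_bigr => k _; rewrite hZ.
Qed.
Arguments key_id {R n}.

Lemma expand_Qp (R : realType) n (M : 'M[R]_n.+1) k :
  horner_mx M (Qp M k) = \sum_(m < k) qc M (k - m) *: M ^+ m + M ^+ k.
Proof.
rewrite /Qp rmorph_sum big_ord_recr /= subnn qc0 hZ scale1r rmorphXn /= horner_mx_X.
by congr (_ + _); apply: eq_bigr => m _; rewrite hZ rmorphXn /= horner_mx_X.
Qed.

Lemma key (R : realType) n (C : 'M[R]_n.+1) (t : 'cV[R]_n.+1) (M : 'M[R]_n.+1) (dl : R) :
  0 < dl ->
  (forall s, 0 < s < dl -> phi C t (invmx (1%:M - s *: M)) = 0) ->
  forall m, (m < n.+1)%N -> phi C t (M ^+ m) = 0.
Proof.
move=> dpos H.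
set qp := \poly_(k < n.+2) qc M k.
set G := \poly_(k < n.+1) phi C t (horner_mx M (Qp M k)).
have HG : forall s, 0 < s < dl -> (qp * G).[s] = 0.
  move=> s hs; rewrite hornerM.
  have [q0|qn0] := eqVneq qp.[s] 0; first by rewrite q0 mul0r.
  have e := key_id M s.
  have hinv : invmx (1%:M - s *: M) =
      qp.[s]^-1 *: (\sum_(k < n.+1) s ^+ k *: horner_mx M (Qp M k)).
    apply: (@inv_left R); rewrite -scalemxAl e scale_scalar_mx.
    by rewrite /qp horner_poly in qn0 *; rewrite mulVf.
  have := H s hs; rewrite hinv phiZ phi_sum => /eqP; rewrite mulf_eq0 invr_eq0.
  rewrite (negbTE qn0) /= => /eqP h.
  suff -> : G.[s] = 0 by rewrite mulr0.
  rewrite /G horner_poly -[in RHS]h.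
  by apply: eq_bigr => k _; rewrite phiZ mulrC.
have qp0 : qp != 0.
  apply/eqP => h; have := congr1 (fun p : {poly R} => p`_0) h.
  by rewrite /qp coef_poly /= qc0 coef0 => /eqP; rewrite oner_eq0.
have hQG : qp * G = 0.
  apply: (@roots_geq_poly_eq0 _ _ [seq dl / (k.+2)%:R | k <- iota 0 (size (qp * G))]).
  - apply/allP => x /mapP [k _ ->]; apply/rootP; apply: HG.
    apply/andP; split; first by rewrite divr_gt0 // ltr0n.
    by rewrite ltr_pdivrMr ?ltr0n // ltr_pMr // ltr1n.
  - rewrite map_inj_uniq ?iota_uniq // => a b /(mulfI (lt0r_neq0 dpos)).
    by move/invr_inj/eqP; rewrite eqr_nat => /eqP [].
  - by rewrite size_map size_iota.
have G0 : G = 0 by move/eqP: hQG; rewrite mulf_eq0 (negbTE qp0) => /eqP.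
have hY : forall k, (k < n.+1)%N -> phi C t (horner_mx M (Qp M k)) = 0.
  by move=> k hk; have := congr1 (fun p : {poly R} => p`_k) G0; rewrite coef_poly hk coef0.
suff : forall k, (k < n.+1)%N -> forall m, (m <= k)%N -> phi C t (M ^+ m) = 0.
  by move=> h m hm; apply: (h m hm).
have step : forall k, (k < n.+1)%N -> (forall m, (m < k)%N -> phi C t (M ^+ m) = 0) ->
    phi C t (M ^+ k) = 0.
  move=> k hk IH; have := hY k hk; rewrite expand_Qp phiD phi_sum big1 ?add0r //.
  by move=> m _; rewrite phiZ IH ?mulr0.
elim=> [|k IH] hk m hm.
  by move: hm; rewrite leqn0 => /eqP ->; apply: step => // m; rewrite ltn0.
move: hm; rewrite leq_eqVlt => /orP [/eqP ->|hm].
  by apply: step => // m' hm'; apply: IH => //; apply: ltnW.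
by apply: IH => //; apply: ltnW.
Qed.

Lemma dotvZl (R : realType) d a (u v : 'cV[R]_d) : dotv (a *: u) v = a * dotv u v.
Proof. by rewrite /dotv mulr_sumr; apply: eq_bigr => r _; rewrite mxE mulrA. Qed.

Lemma dotvZr (R : realType) d a (u v : 'cV[R]_d) : dotv u (a *: v) = a * dotv u v.
Proof. by rewrite /dotv mulr_sumr; apply: eq_bigr => r _; rewrite mxE mulrCA. Qed.

Lemma scale_ok (R : realType) d (alpha : 'I_d -> 'I_d -> 'I_d -> R) (C : 'M[R]_d) (e : R) (t : 'cV[R]_d) :
  0 < e ->
  (forall t : 'cV[R]_d, (forall k, `|t k 0| < e) ->
        dotv (C *m t) (invmx (1%:M - tA alpha t) *m t) = 0) ->
  forall s, 0 < s < e / (1 + \sum_k `|t k 0|) ->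
    phi C t (invmx (1%:M - s *: tA alpha t)) = 0.
Proof.
move=> epos Ha s /andP [s0 hs].
have S0 : 0 <= \sum_k `|t k 0| by apply: sumr_ge0 => k _.
have hp : 0 < 1 + \sum_k `|t k 0| by apply: ltr_pwDl.
have hb : forall k, `|(s *: t) k 0| < e.
  move=> k; rewrite mxE normrM gtr0_norm //.
  have hk : `|t k 0| <= \sum_k `|t k 0|.
    rewrite (bigD1 k) //= lerDl; exact: sumr_ge0.
  have : s * (1 + \sum_k `|t k 0|) < e by rewrite -ltr_pdivlMr.
  have : s * `|t k 0| <= s * (1 + \sum_k `|t k 0|).
    by rewrite ler_wpM2l ?ltW //; lra.
  exact: le_lt_trans.
have := Ha _ hb; rewrite tAZ -!scalemxAr dotvZl dotvZr mulrA => /eqP.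
by rewrite !mulf_eq0 orbb (gt_eqF s0) /= => /eqP.
Qed.

Theorem mainTheorem8 (R : realType) (d : nat)
  (alpha : 'I_d -> 'I_d -> 'I_d -> R) (i j : 'I_d) :
  fully_symmetric alpha ->
  let C := Cmat alpha i j in
  let Pa := exists2 e : R, 0 < e &
      forall t : 'cV[R]_d, (forall k, `|t k 0| < e) ->
        dotv (C *m t) (invmx (1%:M - tA alpha t) *m t) = 0 in
  let Pb := forall (n : nat) (t : 'cV[R]_d),
        dotv (C *m t) ((tA alpha t) ^+ n *m t) = 0 in
  let Pc := forall (n : nat) (t : 'cV[R]_d), (1 <= n <= d.-1)%N ->
        dotv (C *m t) ((tA alpha t) ^+ n *m t) = 0 in
  (Pa <-> Pb) /\ (Pb <-> Pc).
Proof.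
move=> hs C Pa Pb Pc; rewrite /Pa /Pb /Pc {Pa Pb Pc}.
have hC : C^T = - C by apply: C_anti.
move: hs C hC; case: d alpha i j => [|n] alpha i j hs C hC.
  have z : forall u v : 'cV[R]_0, dotv u v = 0 by move=> u v; rewrite /dotv big_ord0.
  by split; split => _; [move=> m t; rewrite z | exists 1 => // t _; rewrite z
    | move=> m t _; rewrite z | move=> m t; rewrite z].
have h0 : forall t, phi C t (tA alpha t ^+ 0) = 0.
  by move=> t; rewrite expr0 -one_mx; exact: phi1.
have toP : forall (t : 'cV[R]_n.+1) m,
    (forall m', (m' < n.+1)%N -> phi C t (tA alpha t ^+ m') = 0) ->
    dotv (C *m t) (tA alpha t ^+ m *m t) = 0.
  move=> t m hm; have := @span_ok R n C t _ hm ('X^m).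
  by rewrite rmorphXn /= horner_mx_X.
have PbPa : (forall (m : nat) (t : 'cV[R]_n.+1),
        dotv (C *m t) (tA alpha t ^+ m *m t) = 0) ->
    exists2 e : R, 0 < e &
      forall t : 'cV[R]_n.+1, (forall k, `|t k 0| < e) ->
        dotv (C *m t) (invmx (1%:M - tA alpha t) *m t) = 0.
  move=> hb; exists 1 => // t _.
  have [r hr] := @inv_poly R n (tA alpha t).
  change (phi C t (invmx (1%:M - tA alpha t)) = 0); rewrite hr.
  by apply: span_ok => m _; apply: hb.
split; split.
- move=> [e epos Ha] m t; apply: toP => m' hm'.
  apply: (@key R n C t _ (e / (1 + \sum_k `|t k 0|))) => //.
    apply: divr_gt0 => //; apply: ltr_pwDl => //; exact: sumr_ge0.
  exact: scale_ok.
- exact: PbPa.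
- by move=> hb m t _; apply: hb.
- move=> hc m t; apply: toP => m' hm'.
  case: m' hm' => [|m'] hm'; first exact: h0.
  by apply: hc.
Qed.
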